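(* Let $\mathbb{K}$ be a field of characteristic $2$ and let $(A,\cdot,\{-,-\},(-)^{\{2\}})$ be a restricted Poisson algebra. Then the second cohomology space $\mathrm{H}^2_{\rm PA}(A)$ classifies the infinitesimal deformations of $A$ up to equivalence: assigning to an infinitesimal deformation $(A^t_1,\cdot,\{-,-\}+t\mu_1,(-)^{\{2\}}+t\omega_1)$ the class of $(\mu_1,\omega_1)$ gives a bijection between equivalence classes of infinitesimal deformations and $\mathrm{H}^2_{\rm PA}(A)$.
   Context: $\mathbb{K}$ has characteristic $2$. Restricted Poisson algebra: commutative associative $(A,\cdot)$ with Lie bracket satisfying $\{ab,c\}=a\{b,c\}+b\{a,c\}$, with a map $(-)^{\{2\}}$ making $(A,\{,\})$ a restricted Lie algebra ($(\lambda x)^{\{2\}}=\lambda^2x^{\{2\}}$, $\mathrm{ad}_{x^{\{2\}}}=\mathrm{ad}_x^2$, $(x+y)^{\{2\}}=x^{\{2\}}+y^{\{2\}}+\{x,y\}$) and $(xy)^{\{2\}}=x^2y^{\{2\}}+y^2x^{\{2\}}+xy\{x,y\}$. $\mathfrak{X}^k(A)$: alternating $k$-linear maps $A^k\to A$ that are derivations of $\cdot$ in each argument. $C^1_{\rm PA}(A)=\mathfrak{X}^1(A)$; for $n\ge2$, $C^n_{\rm PA}(A)$ = pairs $(\varphi,\omega)$, $\varphi\in\mathfrak{X}^n(A)$, $\omega:A\times A^{n-2}\to A$ alternating multilinear in last $n-2$ arguments, with $\omega(\lambda x,z)=\lambda^2\omega(x,z)$, $\omega(x+y,z)=\omega(x,z)+\omega(y,z)+\varphi(x,y,z)$,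 $\omega(xy,z)=x^2\omega(y,z)+y^2\omega(x,z)+xy\varphi(x,y,z)$, $\omega(x,..,z_iz_i',..)=z_i\omega(x,..,z_i',..)+z_i'\omega(x,..,z_i,..)$. Differentials: $\mathrm{d}^1\psi=(\mathrm{d}_{\rm CE}\psi,\delta^1\psi)$ with $\mathrm{d}_{\rm CE}\psi(x,y)=\psi(\{x,y\})+\{x,\psi(y)\}+\{y,\psi(x)\}$, $\delta^1\psi(x)=\psi(x^{\{2\}})+\{x,\psi(x)\}$; $\mathrm{d}^2(\varphi,\omega)=(\mathrm{d}_{\rm CE}\varphi,\delta^2\omega)$ with $\mathrm{d}_{\rm CE}\varphi(x,y,z)=\varphi(\{x,y\},z)+\varphi(\{x,z\},y)+\varphi(\{y,z\},x)+\{x,\varphi(y,z)\}+\{y,\varphi(x,z)\}+\{z,\varphi(x,y)\}$ and $\delta^2\omega(x,z)=\{x,\varphi(x,z)\}+\{z,\omega(x)\}+\varphi(x^{\{2\}},z)+\varphi(\{x,z\},x)$. $\mathrm{H}^2_{\rm PA}(A)=\ker\mathrm{d}^2/\mathrm{im}\,\mathrm{d}^1$ in $C^2_{\rm PA}(A)$. Let $\mathbb{K}^t_k=\mathbb{K}[t]/(t^{k+1})$ and $A^t_k=A\otimes\mathbb{K}^t_k$ with the $\mathbb{K}^t_k$-bilinear extension of $\cdot$. A deformation of order $k$ is given by $\mu_{(k)}=\{-,-\}+\sum_{i=1}^kt^i\mu_i$ and $\omega_{(k)}=(-)^{\{2\}}+\sum_{i=1}^kt^i\omega_i$ with $(\mu_i,\omega_i)\in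 C^2_{\rm PA}(A)$, such that $(A^t_k,\mu_{(k)},\omega_{(k)})$ (with $\mu_{(k)}$ extended $\mathbb{K}^t_k$-bilinearly and $\omega_{(k)}$ extended by $\omega(\lambda X)=\lambda^2\omega(X)$, $\omega(X+Y)=\omega(X)+\omega(Y)+\mu(X,Y)$) is a restricted Lie algebra over $\mathbb{K}^t_k$. Infinitesimal means $k=1$. Two deformations of order $k$ are equivalent if there is an isomorphism of restricted Poisson algebras between them of the form $\Psi=\mathrm{id}+\sum_{i\ge1}t^i\psi_i$ with $\psi_i:A\to A$ linear. *)

(* Defs.v *)
From HB Require Import structures.
From mathcomp Require Import all_boot all_algebra.
Set Implicit Arguments. Unset Strict Implicit. Unset Printing Implicit Defensive.
Import GRing.Theory.
Local Open Scope ring_scope.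

Definition is_rLie (S V : Type) (add : V -> V -> V) (zero : V)
  (smul : S -> V -> V) (sq : S -> S) (br : V -> V -> V) (pm : V -> V) :=
  [/\ forall l X Y Z, br (add (smul l X) Y) Z = add (smul l (br X Z)) (br Y Z),
      forall l X Y Z, br Z (add (smul l X) Y) = add (smul l (br Z X)) (br Z Y),
      forall X, br X X = zero,
      forall X Y Z, add (add (br X (br Y Z)) (br Y (br Z X))) (br Z (br X Y)) = zero &
    [/\ forall l X, pm (smul l X) = smul (sq l) (pm X),
      forall X Y, pm (add X Y) = add (add (pm X) (pm Y)) (br X Y) &
      forall X Y, br (pm X) Y = br X (br X Y)]].

Section RPA.
Variables (K : fieldType) (A : lmodType K).
Variables (mul br : A -> A -> A) (pm : A -> A).

Definition is_rPA :=
  [/\ forall a x y z, mul (a *: x + y) z = a *: mul x z + mul y z,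
      forall x y, mul x y = mul y x,
      forall x y z, mul x (mul y z) = mul (mul x y) z &
    [/\
      is_rLie +%R 0 *:%R (fun l : K => l ^+ 2) br pm,
      forall a b c, br (mul a b) c = mul a (br b c) + mul b (br a c) &
      forall x y, pm (mul x y) =
        mul (mul x x) (pm y) + mul (mul y y) (pm x) + mul (mul x y) (br x y)]].

Definition is_linear (f : A -> A) := forall a x y, f (a *: x + y) = a *: f x + f y.

Definition in_X1 (psi : A -> A) :=
  is_linear psi /\ forall x y, psi (mul x y) = mul x (psi y) + mul y (psi x).

Definition in_X2 (phi : A -> A -> A) :=
  [/\ forall a x y z, phi (a *: x + y) z = a *: phi x z + phi y z,
      forall a x y z, phi z (a *: x + y) = a *: phi z x + phi z y,
      forall x, phi x x = 0,
      forall x y z, phi (mul x y) z = mul x (phi y z) + mul y (phi x z) &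
      forall x y z, phi z (mul x y) = mul x (phi z y) + mul y (phi z x)].

Definition in_C2 (phi : A -> A -> A) (om : A -> A) :=
  [/\ in_X2 phi,
      forall (l : K) x, om (l *: x) = l ^+ 2 *: om x,
      forall x y, om (x + y) = om x + om y + phi x y &
      forall x y, om (mul x y) =
        mul (mul x x) (om y) + mul (mul y y) (om x) + mul (mul x y) (phi x y)].

Definition dCE1 (psi : A -> A) x y := psi (br x y) + br x (psi y) + br y (psi x).
Definition delta1 (psi : A -> A) x := psi (pm x) + br x (psi x).
Definition dCE2 (phi : A -> A -> A) x y z :=
  phi (br x y) z + phi (br x z) y + phi (br y z) x
  + br x (phi y z) + br y (phi x z) + br z (phi x y).
Definition delta2 (phi : A -> A -> A) (om : A -> A) x z :=
  br x (phi x z) + br z (om x) + phi (pm x) z + phi (br x z) x.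

Definition cocycle2 phi om :=
  [/\ in_C2 phi om, forall x y z, dCE2 phi x y z = 0 &
      forall x z, delta2 phi om x z = 0].

Definition coboundary2 (phi : A -> A -> A) (om : A -> A) :=
  exists psi, [/\ in_X1 psi, forall x y, phi x y = dCE1 psi x y &
                  forall x, om x = delta1 psi x].

(* (l0, l1) represents l0 + t l1;  (a, b) represents a + t b.                *)
Definition tmul (l m : K * K) : K * K := (l.1 * m.1, l.1 * m.2 + l.2 * m.1).
Definition tsq (l : K * K) := tmul l l.
Definition tadd (X Y : A * A) : A * A := (X.1 + Y.1, X.2 + Y.2).
Definition tzero : A * A := (0, 0).
Definition tscale (l : K * K) (X : A * A) : A * A :=
  (l.1 *: X.1, l.1 *: X.2 + l.2 *: X.1).
Definition tprod (X Y : A * A) : A * A :=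
  (mul X.1 Y.1, mul X.1 Y.2 + mul X.2 Y.1).
(* K^t_1-bilinear extension of mu_(1) = {-,-} + t mu1 *)
Definition tbr (mu1 : A -> A -> A) (X Y : A * A) : A * A :=
  (br X.1 Y.1, br X.1 Y.2 + br X.2 Y.1 + mu1 X.1 Y.1).
(* extension of om_(1) = (-)^{2} + t om1 by om(lX)=l^2 om(X),
   om(X+Y)=om(X)+om(Y)+mu(X,Y):  om(a + t b) = a^{2} + t (om1 a + {a,b}) *)
Definition tpm (om1 : A -> A) (X : A * A) : A * A :=
  (pm X.1, om1 X.1 + br X.1 X.2).

Definition inf_deformation mu1 om1 :=
  in_C2 mu1 om1 /\ is_rLie tadd tzero tscale tsq (tbr mu1) (tpm om1).

Definition equiv_deformations mu1 om1 mu1' om1' :=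
  exists psi1 : A -> A, is_linear psi1 /\
    let Psi := fun X : A * A => (X.1, X.2 + psi1 X.1) in
    [/\ bijective Psi,
        forall l X, Psi (tscale l X) = tscale l (Psi X),
        forall X Y, Psi (tadd X Y) = tadd (Psi X) (Psi Y) &
      [/\
        forall X Y, Psi (tprod X Y) = tprod (Psi X) (Psi Y),
        forall X Y, Psi (tbr mu1 X Y) = tbr mu1' (Psi X) (Psi Y) &
        forall X, Psi (tpm om1 X) = tpm om1' (Psi X)]].

End RPA.

(* Main.v *)
Require Import Defs.
From HB Require Import structures.
From mathcomp Require Import all_boot all_algebra.
Import GRing.Theory.
Local Open Scope ring_scope.

Ltac find_pull t e :=
  match e with
  | ?s + ?r => let _ := constr:(@erefl _ s : s = t) in constr:(@erefl _ e : e = t + r)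
  | ?s + ?r => let p := find_pull t r in
      lazymatch type of p with
      | _ = _ + ?r' => constr:(eq_trans (f_equal (fun z => s + z) p) (addrCA s t r'))
      end
  | ?s => let _ := constr:(@erefl _ s : s = t) in constr:(esym (addr0 t) : e = t + 0)
  end.

Ltac cancel2 KX :=
  lazymatch goal with
  | |- 0 = 0 => reflexivity
  | |- ?t + ?r = 0 =>
      let p := find_pull t r in
      lazymatch type of p with
      | _ = _ + ?r' =>
        refine (eq_trans (f_equal (fun z => t + z) p) (eq_trans (KX t r') _)); cancel2 KX
      end
  end.

Ltac cancel3 KX :=
  lazymatch goal with
  | |- 0 = 0 => reflexivity
  | |- ?t + ?r = 0 =>
      first [ let p := find_pull t r in
      lazymatch type of p with
      | _ = _ + ?r' =>
        refine (eq_trans (f_equal (fun z => t + z) p) (eq_trans (KX t r') _))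
      end; cancel3 KX | idtac ]
  | _ => idtac
  end.

Section Main.
Variables (K : fieldType) (A : lmodType K).
Hypothesis ch2 : 2%N \in [pchar K].

Lemma two0 : (2%:R : K) = 0. Proof. exact: pcharf0 ch2. Qed.
Lemma k2 (k : K) : k + k = 0. Proof. by rewrite -mulr2n -mulr_natr two0 mulr0. Qed.
Lemma addxx (x : A) : x + x = 0.
Proof. by rewrite -mulr2n -scaler_nat two0 scale0r. Qed.
Lemma oppE (x : A) : - x = x.
Proof. by apply/eqP; rewrite -subr_eq0 -opprD addxx oppr0. Qed.
Lemma addKx (t r : A) : t + (t + r) = r.
Proof. by rewrite addrA addxx add0r. Qed.
Lemma eq_by (L R S : A) : S = 0 -> L + (R + S) = 0 -> L = R.
Proof. move=> -> ; rewrite addr0 => h. by rewrite -[L](addKx R) (addrC R L) h addr0. Qed.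
Lemma eq_by0 (L R : A) : L + R = 0 -> L = R.
Proof. by move=> h; apply: (@eq_by L R 0) => //; rewrite addr0. Qed.
Lemma add0S (S1 S2 : A) : S1 = 0 -> S2 = 0 -> S1 + S2 = 0.
Proof. by move=> -> ->; rewrite addr0. Qed.
Lemma eq_add0 (L R : A) : L = R -> L + R = 0.
Proof. by move=> ->; rewrite addxx. Qed.

Arguments add0S {S1 S2}. Arguments eq_add0 {L R}. Arguments eq_by0 {L R}.
Definition LL (f : A -> A -> A) := forall a x y z, f (a *: x + y) z = a *: f x z + f y z.
Definition RR (f : A -> A -> A) := forall a x y z, f z (a *: x + y) = a *: f z x + f z y.

Section Bil.
Variable f : A -> A -> A.
Lemma f0l : LL f -> forall z, f 0 z = 0.
Proof. move=> h z; have := h 1 0 0 z; by rewrite !scale1r addr0 addxx. Qed.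
Lemma fDl : LL f -> forall x y z, f (x + y) z = f x z + f y z.
Proof. by move=> h x y z; have := h 1 x y z; rewrite !scale1r. Qed.
Lemma fZl : LL f -> forall a x z, f (a *: x) z = a *: f x z.
Proof. by move=> h a x z; have := h a x 0 z; rewrite addr0 f0l // addr0. Qed.
Lemma f0r : RR f -> forall z, f z 0 = 0.
Proof. move=> h z; have := h 1 0 0 z; by rewrite !scale1r addr0 addxx. Qed.
Lemma fDr : RR f -> forall x y z, f z (x + y) = f z x + f z y.
Proof. by move=> h x y z; have := h 1 x y z; rewrite !scale1r. Qed.
Lemma fZr : RR f -> forall a x z, f z (a *: x) = a *: f z x.
Proof. by move=> h a x z; have := h a x 0 z; rewrite addr0 f0r // addr0. Qed.
Lemma fC : LL f -> RR f -> (forall x, f x x = 0) -> forall x y, f x y = f y x.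
Proof. move=> hl hr ha x y; have := ha (x + y).
rewrite fDl // !fDr // !ha add0r addr0 => h; exact: eq_by0. Qed.
End Bil.
Arguments f0l {f}. Arguments fDl {f}. Arguments fZl {f}. Arguments f0r {f}. Arguments fDr {f}. Arguments fZr {f}. Arguments fC {f}.

Lemma lin0 (f : A -> A) : (forall a x y, f (a *: x + y) = a *: f x + f y) -> f 0 = 0.
Proof. move=> h; have := h 1 0 0; by rewrite !scale1r addr0 addxx. Qed.
Lemma linD (f : A -> A) : (forall a x y, f (a *: x + y) = a *: f x + f y) ->
  forall x y, f (x + y) = f x + f y.
Proof. by move=> h x y; have := h 1 x y; rewrite !scale1r. Qed.
Lemma linZ (f : A -> A) : (forall a x y, f (a *: x + y) = a *: f x + f y) ->
  forall a x, f (a *: x) = a *: f x.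
Proof. by move=> h a x; have := h a x 0; rewrite addr0 lin0 // addr0. Qed.

Variables (mul br : A -> A -> A) (pm : A -> A).
Hypothesis H : is_rPA mul br pm.

Lemma brL : LL br. Proof. by case: H => _ _ _ [[]]. Qed.
Lemma brR : RR br. Proof. by case: H => _ _ _ [[]]. Qed.
Lemma brxx x : br x x = 0. Proof. by case: H => _ _ _ [[]]. Qed.
Lemma jac x y z : br x (br y z) + br y (br z x) + br z (br x y) = 0.
Proof. by case: H => _ _ _ [[]]. Qed.
Lemma pmZ l x : pm (l *: x) = l ^+ 2 *: pm x. Proof. by case: H => _ _ _ [[_ _ _ _ []]]. Qed.
Lemma pmD x y : pm (x + y) = pm x + pm y + br x y. Proof. by case: H => _ _ _ [[_ _ _ _ []]]. Qed.
Lemma adpm x y : br (pm x) y = br x (br x y). Proof. by case: H => _ _ _ [[_ _ _ _ []]]. Qed.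
Lemma mulL : LL mul. Proof. by case: H. Qed.
Lemma mulC x y : mul x y = mul y x. Proof. by case: H. Qed.
Lemma mulR : RR mul. Proof. by move=> a x y z; rewrite !(mulC z) mulL. Qed.
Lemma brC x y : br x y = br y x. Proof. exact: (fC brL brR brxx). Qed.
Lemma br0l z : br 0 z = 0. Proof. exact: (f0l brL). Qed.
Lemma br0r z : br z 0 = 0. Proof. exact: (f0r brR). Qed.
Lemma brDl x y z : br (x + y) z = br x z + br y z. Proof. exact: (fDl brL). Qed.
Lemma brDr x y z : br z (x + y) = br z x + br z y. Proof. exact: (fDr brR). Qed.
Lemma brZl a x z : br (a *: x) z = a *: br x z. Proof. exact: (fZl brL). Qed.
Lemma brZr a x z : br z (a *: x) = a *: br z x. Proof. exact: (fZr brR). Qed.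
Lemma mul0l z : mul 0 z = 0. Proof. exact: (f0l mulL). Qed.
Lemma mul0r z : mul z 0 = 0. Proof. exact: (f0r mulR). Qed.
Lemma mulDl x y z : mul (x + y) z = mul x z + mul y z. Proof. exact: (fDl mulL). Qed.
Lemma mulDr x y z : mul z (x + y) = mul z x + mul z y. Proof. exact: (fDr mulR). Qed.
Lemma mulZl a x z : mul (a *: x) z = a *: mul x z. Proof. exact: (fZl mulL). Qed.
Lemma mulZr a x z : mul z (a *: x) = a *: mul z x. Proof. exact: (fZr mulR). Qed.

Let KX := addKx.

Lemma X2_LL phi : in_X2 mul phi -> LL phi. Proof. by case. Qed.
Lemma X2_RR phi : in_X2 mul phi -> RR phi. Proof. by case. Qed.
Lemma X2_xx phi : in_X2 mul phi -> forall x, phi x x = 0. Proof. by case. Qed.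
Arguments X2_LL {phi}. Arguments X2_RR {phi}. Arguments X2_xx {phi}.


Lemma part1 mu om : inf_deformation mul br pm mu om -> cocycle2 mul br pm mu om.
Proof.
case=> hC [_ _ _ Jac [_ _ Ad]]; split => //.
  have hX : in_X2 mul mu by case: hC.
  have m0l := f0l (X2_LL hX); have m0r := f0r (X2_RR hX).
  have mC := fC (X2_LL hX) (X2_RR hX) (X2_xx hX).
  move=> x y z; have := Jac (x,0) (y,0) (z,0).
  move/(congr1 snd); rewrite /tadd /tbr /tzero /=.
  rewrite ?br0r ?br0l ?m0r ?m0l ?addr0 ?add0r => J.
  rewrite /dCE2.
  apply: (@eq_by _ 0 _ J).
  rewrite (mC x (br y z)) (mC y (br z x)) (mC z (br x y)) (mC z x) (brC z x).
  rewrite -!addrA add0r. cancel2 KX.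
have hX : in_X2 mul mu by case: hC.
have m0l := f0l (X2_LL hX); have m0r := f0r (X2_RR hX).
have mC := fC (X2_LL hX) (X2_RR hX) (X2_xx hX).
move=> x z; have := Ad (x,0) (z,0).
move/(congr1 snd); rewrite /tpm /tbr /=.
rewrite ?br0r ?br0l ?m0r ?m0l ?addr0 ?add0r => /eq_add0 J.
rewrite /delta2.
apply: (@eq_by _ 0 _ J).
rewrite (mC x (br x z)) (brC (om x) z).
rewrite -!addrA add0r. cancel2 KX.
Qed.
Lemma part3L phi om : cocycle2 mul br pm phi om ->
  is_rLie (@tadd K A) (@tzero K A) (@tscale K A) (@tsq K) (tbr br phi) (tpm br pm om).
Proof.
case=> hC hd hdel; have hX : in_X2 mul phi by case: hC.
have [_ omZ omD _] := hC.
have m0l := f0l (X2_LL hX); have m0r := f0r (X2_RR hX).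
have mC := fC (X2_LL hX) (X2_RR hX) (X2_xx hX).
have mDl := fDl (X2_LL hX); have mDr := fDr (X2_RR hX).
have mZl := fZl (X2_LL hX); have mZr := fZr (X2_RR hX).
have mxx := X2_xx hX.
split.
- move=> [l1 l2] [x1 x2] [y1 y2] [z1 z2]; rewrite /tbr /tscale /tadd /=.
  congr (_, _); first by rewrite brDl brZl.
  apply: eq_by0. rewrite !(brDl, brZl, mDl, mZl, scalerDr).
  rewrite -!addrA. idtac.
cancel2 KX.
- move=> [l1 l2] [x1 x2] [y1 y2] [z1 z2]; rewrite /tbr /tscale /tadd /=.
  congr (_, _); first by rewrite brDr brZr.
  apply: eq_by0. rewrite !(brDr, brZr, mDr, mZr, scalerDr).
  rewrite -!addrA. cancel2 KX.
- move=> [x1 x2]; rewrite /tbr /tzero /=. by rewrite brxx mxx addr0 (brC x2) addxx.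
- move=> [x1 x2] [y1 y2] [z1 z2]; rewrite /tbr /tzero /tadd /=.
  congr (_, _); first exact: jac.
  have S := add0S (add0S (add0S (jac x2 y1 z1) (jac x1 y2 z1)) (jac x1 y1 z2)) (hd x1 y1 z1).
  rewrite /dCE2 (mC (br x1 y1) z1) (mC (br x1 z1) y1) (brC x1 z1) (mC (br y1 z1) x1) (mC x1 z1) in S.
  apply: (@eq_by _ 0 _ S).
  rewrite !(brDr, mDr, mDl).
  rewrite -!addrA add0r. cancel2 KX.
- split.
  + move=> [l1 l2] [x1 x2]; rewrite /tpm /tscale /tsq /tmul /=.
    congr (_, _); first by rewrite pmZ expr2.
    rewrite omZ !(brZr, brZl, brDr, scalerDr) brxx !scaler0 addr0 (mulrC l2 l1) k2 scale0r addr0 !scalerA expr2.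
    done.
  + move=> [x1 x2] [y1 y2]; rewrite /tpm /tbr /tadd /=.
    congr (_, _); first exact: pmD.
    apply: eq_by0. rewrite omD !(brDr, brDl) (brC y1 x2).
    rewrite -!addrA. cancel2 KX.
  + move=> [x1 x2] [y1 y2]; rewrite /tpm /tbr /tadd /=.
    congr (_, _); first exact: adpm.
    have S := add0S (add0S (eq_add0 (adpm x1 y2)) (jac x1 x2 y1)) (hdel x1 y1).
    rewrite /delta2 in S.
    apply: (@eq_by _ _ _ S).
    rewrite !(brDr, brDl) (brC (om x1) y1) (brC (br x1 x2) y1) (brC y1 x1) (mC x1 (br x1 y1)).
    rewrite -!addrA. cancel2 KX.
Qed.
Lemma part2f mu om mu' om' : equiv_deformations mul br pm mu om mu' om' ->
  coboundary2 mul br pm (fun x y => mu x y - mu' x y) (fun x => om x - om' x).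
Proof.
case=> psi [lin [_ _ _ [Pm Pb Pp]]]; exists psi; split.
- split=> // x y; have := Pm (x,0) (y,0); move/(congr1 snd) => /=.
  rewrite ?mul0r ?mul0l ?addr0 ?add0r => ->. by rewrite (mulC (psi x) y).
- move=> x y; have := Pb (x,0) (y,0); move/(congr1 snd) => /=.
  rewrite ?br0r ?br0l ?addr0 ?add0r (brC (psi x) y) => E.
  rewrite /dCE1 oppE. apply: (@eq_by _ _ _ (eq_add0 E)). rewrite -!addrA. cancel2 KX.
- move=> x; have := Pp (x,0); move/(congr1 snd) => /=.
  rewrite ?br0r ?br0l ?addr0 ?add0r => E.
  rewrite /delta1 oppE. apply: (@eq_by _ _ _ (eq_add0 E)). rewrite -!addrA. cancel2 KX.
Qed.

Lemma part2b mu om mu' om' :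
  coboundary2 mul br pm (fun x y => mu x y - mu' x y) (fun x => om x - om' x) ->
  equiv_deformations mul br pm mu om mu' om'.
Proof.
case=> psi [[lin der] Eb Ep]; exists psi; split=> //.
have pD := @linD psi lin; have pZ := @linZ psi lin.
split.
- exists (fun X => (X.1, X.2 - psi X.1)) => [[a b]|[a b]] /=; by rewrite ?addrK ?subrK.
- move=> [l1 l2] [a b]; rewrite /tscale /=; congr (_,_).
  rewrite pZ scalerDr. apply: eq_by0; rewrite -!addrA; cancel2 KX.
- move=> [a b] [c d]; rewrite /tadd /=; congr (_,_).
  rewrite pD. apply: eq_by0; rewrite -!addrA; cancel2 KX.
- split.
  + move=> [a b] [c d]; rewrite /tprod /=; congr (_,_).
    rewrite der mulDr mulDl (mulC (psi a) c). apply: eq_by0; rewrite -!addrA; cancel2 KX.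
  + move=> [a b] [c d]; rewrite /tbr /=; congr (_,_).
    have E := Eb a c; rewrite oppE /dCE1 in E.
    rewrite brDr brDl (brC (psi a) c). apply: (@eq_by _ _ _ (eq_add0 E)).
    rewrite -!addrA; cancel2 KX.
  + move=> [a b]; rewrite /tpm /=; congr (_,_).
    have E := Ep a; rewrite oppE /delta1 in E.
    rewrite brDr. apply: (@eq_by _ _ _ (eq_add0 E)).
    rewrite -!addrA; cancel2 KX.
Qed.
End Main.

Theorem mainTheorem6 (K : fieldType) (A : lmodType K)
  (mul br : A -> A -> A) (pm : A -> A) :
  2%N \in [pchar K] -> is_rPA mul br pm ->
  [/\ (forall mu1 om1, inf_deformation mul br pm mu1 om1 ->
         cocycle2 mul br pm mu1 om1),
      (forall mu1 om1 mu1' om1',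
         inf_deformation mul br pm mu1 om1 ->
         inf_deformation mul br pm mu1' om1' ->
         (equiv_deformations mul br pm mu1 om1 mu1' om1' <->
          coboundary2 mul br pm (fun x y => mu1 x y - mu1' x y)
                                (fun x => om1 x - om1' x))) &
      (forall phi om, cocycle2 mul br pm phi om ->
         exists mu1 om1, inf_deformation mul br pm mu1 om1 /\
           coboundary2 mul br pm (fun x y => mu1 x y - phi x y)
                                 (fun x => om1 x - om x))].
Proof.
move=> ch2 H; split.
- exact: (@part1 K A ch2 mul br pm H).
- move=> mu1 om1 mu1' om1' _ _; split.
  + exact: (@part2f K A ch2 mul br pm H).
  + exact: (@part2b K A ch2 mul br pm H).
- move=> phi om hc; exists phi, om; split.
  + split; first by case: hc.
    exact: (@part3L K A ch2 mul br pm H).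
  + exists (fun _ => 0); split.
    * split; first by move=> a x y; rewrite scaler0 addr0.
      by move=> x y; rewrite (@mul0r K A ch2 mul br pm H) (@mul0r K A ch2 mul br pm H) addr0.
    * by move=> x y; rewrite /dCE1 subrr !(@br0r K A ch2 mul br pm H) !addr0.
    * by move=> x; rewrite /delta1 subrr !(@br0r K A ch2 mul br pm H) !addr0.
Qed.
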